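(* Let $n\ge 1$ and $P\ge 1$ be integers, and set $l_n=\frac{3\cdot 2^{n-1}-1}{2}$. For real $x$ define $$S_n(x)=\sum_{l=2^{n-1}}^{2^{n}-1}\frac{1}{x-(2l-1)\pi i}.$$ Then for every real $x$, $$\left|\,S_n(x)-\sum_{l=2^{n-1}}^{2^{n}-1}\frac{1}{x-(2l_n-1)\pi i}\sum_{\nu=0}^{P-1}\left(\frac{2(l-l_n)\pi i}{x-(2l_n-1)\pi i}\right)^{\nu}\right|\le \frac{1}{2\pi}\cdot\frac{1}{3^{P}}.$$
   Context: Here $i$ denotes the imaginary unit. The sums $S_n$ are the dyadic groups of the pole expansion $\sum_{l\ge1}\frac{1}{x-(2l-1)\pi i}$ of the Fermi–Dirac function: the $n$-th group collects the poles $(2l-1)\pi i$ with $2^{n-1}\le l\le 2^n-1$, and $l_n$ is the midpoint of the index range $[2^{n-1},2^n-1]$. The subtracted double sum is the truncation after $P$ terms of the geometric-series (multipole) expansion of each term of $S_n$ about the pole $(2l_n-1)\pi i$. *)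

(* Defs.v *)
From HB Require Import structures.
From mathcomp Require Import all_boot all_order all_algebra.
From mathcomp Require Import reals trigo.
From mathcomp Require Export complex.
Set Implicit Arguments. Unset Strict Implicit. Unset Printing Implicit Defensive.
Import Order.TTheory GRing.Theory Num.Theory.
Local Open Scope ring_scope.
Local Open Scope complex_scope.

Definition l_mid (R : realType) (n : nat) : R :=
  ((3 * 2 ^ n.-1)%:R - 1) / 2.

Definition S_n (R : realType) (n : nat) (x : R) : R[i] :=
  \sum_(2 ^ n.-1 <= l < 2 ^ n)
     (x%:C - ((2 * l%:R - 1) * pi)%:C * 'i)^-1.

Definition S_n_trunc (R : realType) (n P : nat) (x : R) : R[i] :=
  \sum_(2 ^ n.-1 <= l < 2 ^ n)
     (x%:C - ((2 * l_mid R n - 1) * pi)%:C * 'i)^-1 *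
     \sum_(0 <= nu < P)
        ((((2 * (l%:R - l_mid R n)) * pi)%:C * 'i) /
         (x%:C - ((2 * l_mid R n - 1) * pi)%:C * 'i)) ^+ nu.

(* Main.v *)
Require Import Defs.
From HB Require Import structures.
From mathcomp Require Import all_boot all_order all_algebra.
From mathcomp Require Import reals trigo.
From mathcomp Require Import complex.
From mathcomp Require Import ring lra.
Import Order.TTheory GRing.Theory Num.Theory.
Local Open Scope ring_scope.
Local Open Scope complex_scope.
From mathcomp Require Import ring lra.
Lemma normIm (R : realType) (x y : R) : `|y|%:C <= `|x%:C - y%:C*'i|.
Proof.
have := normc_ge_Re ((x%:C - y%:C*'i) * 'i). rewrite normrM normCi mulr1 /=.
have -> : (x - (y * 0 - 0 * 1)) * 0 - (0 - (y * 1 + 0 * 0)) * 1 = y by ring.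
by [].
Qed.

Lemma normRC (R : realType) (r : R) : `|r%:C| = `|r|%:C.
Proof. by rewrite normc_def /= expr0n /= addr0 sqrtr_sqr. Qed.

Lemma normRi (R : realType) (r : R) : `|r%:C * 'i| = `|r|%:C.
Proof. by rewrite normrM normCi mulr1 normRC. Qed.

Lemma normRe (R : realType) (z : R[i]) : `|z| = (complex.Re `|z|)%:C.
Proof. by rewrite RRe_real // normr_real. Qed.

Lemma geom_err (R : realType) (a d : R[i]) (P : nat) : a != 0 -> a - d != 0 ->
  (a - d)^-1 - a^-1 * \sum_(0 <= nu < P) (d / a) ^+ nu = (d / a) ^+ P / (a - d).
Proof.
move=> a0 ad0.
have q1 : d / a - 1 != 0.
  apply: contra ad0 => /eqP h. 
  have : d / a * a = a by rewrite (subr0_eq h) mul1r.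
  by rewrite mulfVK // => ->; rewrite subrr.
have hs : \sum_(0 <= nu < P) (d / a) ^+ nu = ((d/a)^+P - 1) / (d/a - 1).
  by rewrite big_mkord subrX1 [_ * \sum_(i < P) _]mulrC mulfK.
rewrite hs. set q := (d/a)^+P.
have -> : d / a - 1 = (d - a) / a by field.
field. by rewrite ad0 a0 -oppr_eq0 opprB ad0.
Qed.

Definition Tsum (R : realType) (m : nat) : R :=
  \sum_(k < m) `|2 * k%:R + 1 - m%:R|.

Lemma Tsum_eq (R : realType) (m : nat) :
  2 * Tsum R m = m%:R ^+ 2 - (odd m)%:R.
Proof.
suff : 2 * Tsum R m = m%:R ^+ 2 - (odd m)%:R /\
       2 * Tsum R m.+1 = m.+1%:R ^+ 2 - (odd m.+1)%:R by case.
elim: m => [|m [IH1 IH2]].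
  rewrite /Tsum !big_ord0 big_ord1 /=; split; first ring.
  by rewrite mulr0 add0r subrr normr0 mulr0 expr1n subrr.
split=> //.
have -> : Tsum R m.+2 = Tsum R m + 2 * (m.+1)%:R.
  rewrite /Tsum big_ord_recl big_ord_recr /=.
  have -> : \sum_(i < m) `|2 * (bump 0 i)%:R + 1 - m.+2%:R| =
            \sum_(i < m) `|2 * i%:R + 1 - m%:R| :> R.
    apply: eq_bigr => i _; congr `|_|; rewrite /bump /= -(natr1 i) -(natr1 m.+1) -(natr1 m); ring.
  rewrite mulr0 add0r -(natr1 m.+1) -(natr1 m).
  have -> : 2 * (m%:R + 1) + 1 - (m%:R + 1 + 1) = (m%:R + 1) :> R by ring.
  have -> : 1 - (m%:R + 1 + 1) = - (m%:R + 1) :> R by ring.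
  rewrite normrN ger0_norm; last by rewrite addr_ge0 // ler0n.
  ring.
rewrite mulrDr IH1 /= negbK -(natr1 m.+1) -(natr1 m).
by case: (odd m) => /=; ring.
Qed.
Lemma real_bound (R : realType) (P : nat) (hP : (1 <= P)%N) (D A B c M t p: R) :
  0 < p -> 0 < c -> 0 < M -> 0 <= t -> 3 * t <= c -> D = t * p ->
  c * p <= A -> M * p <= B ->
  D ^+ P / A ^+ P / B <= (1/3) ^+ P * 3 * t / (c * M * p).
Proof.
move=> p0 c0 M0 t0 tc -> hA hB.
have A0 : 0 < A by apply: lt_le_trans hA; rewrite mulr_gt0.
have B0 : 0 < B by apply: lt_le_trans hB; rewrite mulr_gt0.
set r := t * p / A.
have r0 : 0 <= r by rewrite /r divr_ge0 ?mulr_ge0 // ?ltW.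
have r3 : r <= 1/3.
  rewrite /r ler_pdivrMr //.
  have : 3 * t * p <= c * p by rewrite ler_pM2r.
  nra.
have -> : (t * p) ^+ P / A ^+ P = r ^+ P by rewrite /r expr_div_n.
case: P hP => // P _.
have h1 : r ^+ P <= (1/3) ^+ P.
  by apply: lerXn2r => //; rewrite qualifE /= // divr_ge0.
have hrP : r ^+ P.+1 <= 3 * (1/3) ^+ P.+1 * r.
  have -> : 3 * (1/3) ^+ P.+1 = (1/3) ^+ P :> R by rewrite exprS; field.
  by rewrite exprSr ler_wpM2r.
have hAB : (c * p) * (M * p) <= A * B by apply: ler_pM => //; rewrite mulr_ge0 // ltW.
have hrB : r / B <= t / (c * M * p).
  have -> : t / (c * M * p) = (t * p) / ((c * p) * (M * p)).
    by field; rewrite !(gt_eqF, mulr_gt0).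
  rewrite /r -mulrA -invfM; apply: ler_wpM2l; first by rewrite mulr_ge0 // ltW.
  by rewrite lef_pV2 ?posrE ?mulr_gt0.
apply: le_trans (_ : 3 * (1/3) ^+ P.+1 * r / B <= _).
  by rewrite ler_wpM2r // invr_ge0 ltW.
have -> : (1/3) ^+ P.+1 * 3 * t / (c * M * p) = 3 * (1/3) ^+ P.+1 * (t / (c * M * p)).
  by rewrite !mulrA [_ * 3]mulrC.
rewrite -mulrA; apply: ler_wpM2l => //.
by rewrite mulr_ge0 // exprn_ge0 // divr_ge0.
Qed.

Theorem mainTheorem1 (R : realType) (n P : nat) (hn : (1 <= n)%N) (hP : (1 <= P)%N)
  (x : R) :
  `| S_n n x - S_n_trunc n P x | <= ((1 / (2 * pi)) * (1 / 3 ^+ P))%:C.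
Proof.
rewrite /S_n /S_n_trunc -sumrB.
have hm : (2 ^ n = 2 ^ n.-1 * 2)%N by rewrite -expnSr prednK.
rewrite hm.
have hL : l_mid R n = ((3 * 2 ^ n.-1)%:R - 1) / 2 by [].
set m := (2 ^ n.-1)%N in hm hL *.
have m1 : (1 <= m)%N by rewrite expn_gt0.
have m1R : 1 <= m%:R :> R by rewrite ler1n.
set L := l_mid R n in hL *.
set c := 2 * L - 1.
have hc : c = 3 * m%:R - 2 by rewrite /c hL natrM; field.
set a := x%:C - (c * pi)%:C * 'i.
have pi0 := @pi_gt0 R.
have c0 : 0 < c by rewrite hc; lra.
have ha : (c*pi)%:C <= `|a| by have := @normIm R x (c*pi); rewrite ger0_norm // mulr_ge0 // ltW.
have a0 : a != 0.
  by rewrite -normr_gt0; apply: lt_le_trans ha; rewrite ltcR mulr_gt0.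
apply: le_trans (ler_norm_sum _ _ _) _.
apply: le_trans (_ : \sum_(m <= l < m * 2) ((1/3)^+P * 3 * `|2 * l%:R - 1 - c| / (c * (2 * m%:R - 1) * pi))%:C <= _).
  rewrite big_nat [X in _ <= X]big_nat; apply: ler_sum => l /andP[hl1 hl2].
  have hl1' : m%:R <= l%:R :> R by rewrite ler_nat.
  have hl2' : l%:R + 1 <= 2 * m%:R :> R.
    by rewrite natr1 -[2]/(2%:R) -natrM ler_nat mulnC.
  set d := (2 * (l%:R - L) * pi)%:C * 'i.
  have had : x%:C - ((2 * l%:R - 1) * pi)%:C * 'i = a - d.
    rewrite /a /d /c.
    have -> : ((2 * l%:R - 1) * pi) = (2*L-1)*pi + 2*(l%:R - L)*pi by ring.
    by rewrite rmorphD /=; ring.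
  have hb : ((2 * l%:R - 1) * pi)%:C <= `|a - d|.
    have := @normIm R x ((2 * l%:R - 1) * pi); rewrite had ger0_norm // mulr_ge0 // ?ltW //.
    lra.
  have ad0 : a - d != 0.
    rewrite -normr_gt0; apply: lt_le_trans hb; rewrite ltcR mulr_gt0 //; lra.
  rewrite had geom_err //.
  rewrite normf_div normrX normf_div /d normRi (@normRe R a) (@normRe R (a - d)).
  rewrite -fmorph_div -rmorphXn -fmorph_div lecR.
  rewrite expr_div_n.
  rewrite (@normRe R a) lecR in ha.
  rewrite (@normRe R (a - d)) lecR in hb.
  have M0 : 0 < 2 * m%:R - 1 :> R by lra.
  have t3 : 3 * `|2 * l%:R - 1 - c| <= c.
    suff : `|2 * l%:R - 1 - c| <= c / 3 by lra.
    rewrite ler_norml hc; apply/andP; split; lra.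
  have hD : `|2 * (l%:R - L) * pi| = `|2 * l%:R - 1 - c| * pi.
    rewrite normrM (gtr0_norm pi0); congr (`|_| * _); rewrite /c; ring.
  have hB : (2 * m%:R - 1) * pi <= complex.Re `|a - d|.
    apply: le_trans hb; rewrite ler_pM2r //; lra.
  exact: (@real_bound R P hP _ _ _ c (2 * m%:R - 1) `|2 * l%:R - 1 - c| pi pi0 c0 M0 (normr_ge0 _) t3 hD ha hB).
rewrite -rmorph_sum lecR.
have -> : \sum_(m <= l < m * 2) (1 / 3) ^+ P * 3 * `|2 * l%:R - 1 - c| / (c * (2 * m%:R - 1) * pi)
   = (1 / 3) ^+ P * 3 / (c * (2 * m%:R - 1) * pi) * Tsum R m.
  rewrite /Tsum mulr_sumr -[X in \sum_(X <= _ < _) _](add0n m) big_addn.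
  have -> : (m * 2 - m = m)%N by rewrite muln2 -addnn addnK.
  rewrite big_mkord; apply: eq_bigr => k _.
  have -> : 2 * (k + m)%N%:R - 1 - c = 2 * k%:R + 1 - m%:R by rewrite natrD hc; ring.
  ring.
have hT := Tsum_eq R m.
have key : 6 * Tsum R m <= c * (2 * m%:R - 1).
  rewrite hc.
  case hodd: (odd m) hT => /= hT.
    have := sqr_ge0 (6 * m%:R - 7 : R); nra.
  have m2 : (2 <= m)%N.
    by move: m1 hodd; case: (m) => [|[|k]].
  have m2R : 2 <= m%:R :> R by rewrite (ler_nat R 2 m).
  nra.
rewrite -subr_ge0.
have -> : 1 / (2 * pi) * (1 / 3 ^+ P) -
    (1 / 3) ^+ P * 3 / (c * (2 * m%:R - 1) * pi) * Tsum R m =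
    (1 / 3) ^+ P / (2 * pi * (c * (2 * m%:R - 1))) * (c * (2 * m%:R - 1) - 6 * Tsum R m).
  rewrite expr_div_n expr1n; field.
  rewrite !(gt_eqF, mulr_gt0, expf_neq0) //; lra.
apply: mulr_ge0; last by lra.
rewrite divr_ge0 ?exprn_ge0 ?divr_ge0 // mulr_ge0 ?mulr_ge0 // ?ltW //; lra.
Qed.
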